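(* Let $G$ be a tree on $n$ vertices $1,2,\ldots,n$ with edges $e_1,\ldots,e_{n-1}$ and signless Laplacian $Q$. Then the Moore-Penrose inverse $Q^+=[q^+_{i,j}]$ of $Q$ is given, for all vertices $i,j$, by $$q^+_{i,j}=\frac{(-1)^{d(i,j)}}{n^2}\left(\sum_{k:\ i,j\in G_H(e_k)}|G_T(e_k)|^2+\sum_{k:\ i,j\in G_T(e_k)}|G_H(e_k)|^2-\sum_{k:\ e_k\in P_{i-j}}|G_H(e_k)|\,|G_T(e_k)|\right).$$
   Context: The signless Laplacian is $Q=D+A$, where $A$ is the adjacency matrix and $D$ the diagonal degree matrix. Each edge is written $e_k=\{l_k,m_k\}$ with $l_k<m_k$. The head component $G_H(e_k)$ is the connected component of $G\setminus e_k$ containing $m_k$; the tail component $G_T(e_k)$ is the component containing $l_k$. $|X|$ is the number of vertices of $X$. $d(i,j)$ is the graph distance and $P_{i-j}$ is the (unique) path between $i$ and $j$ in $G$; ''$e_k\in P_{i-j}$'' means $e_k$ is an edge of this path. The Moore-Penrose inverse of a real matrix $A$ is the unique matrix $A^+$ with $AA^+A=A$, $A^+AA^+=A^+$, $(AA^+)^T=AA^+$, $(A^+A)^T=A^+A$. *)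

(* Defs.v *)
From mathcomp Require Import all_boot all_order all_algebra.
Set Implicit Arguments. Unset Strict Implicit. Unset Printing Implicit Defensive.
Import Order.TTheory GRing.Theory Num.Theory.
Local Open Scope ring_scope.

Definition simple_graph n (e : rel 'I_n) : Prop :=
  symmetric e /\ irreflexive e.

Definition connected_graph n (e : rel 'I_n) : Prop :=
  forall x y, connect e x y.

Definition acyclic n (e : rel 'I_n) : Prop :=
  forall (x : 'I_n) (p : seq 'I_n),
    path e x p -> uniq (x :: p) -> (2 <= size p)%N -> ~~ e (last x p) x.

Definition is_tree n (e : rel 'I_n) : Prop :=
  simple_graph e /\ connected_graph e /\ acyclic e.

(* edges e_k = {l_k, m_k} with l_k < m_k, represented as pairs (l, m) *)
Definition is_edge n (e : rel 'I_n) (p : 'I_n * 'I_n) : bool :=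
  ((p.1 < p.2)%N) && e p.1 p.2.

Definition del_edge n (e : rel 'I_n) (l m : 'I_n) : rel 'I_n :=
  fun x y => e x y && ~~ (((x == l) && (y == m)) || ((x == m) && (y == l))).

(* head component G_H(e_k): component of G \ e_k containing m_k *)
Definition head_comp n (e : rel 'I_n) (p : 'I_n * 'I_n) : {set 'I_n} :=
  [set v | connect (del_edge e p.1 p.2) p.2 v].
(* tail component G_T(e_k): component of G \ e_k containing l_k *)
Definition tail_comp n (e : rel 'I_n) (p : 'I_n * 'I_n) : {set 'I_n} :=
  [set v | connect (del_edge e p.1 p.2) p.1 v].

Definition walk_len n (e : rel 'I_n) (i j : 'I_n) (k : nat) : bool :=
  [exists t : k.-tuple 'I_n, path e i t && (last i t == j)].

(* graph distance d(i,j) (shortest walk length; n is a default never reached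
   in a connected graph) *)
Definition dist n (e : rel 'I_n) (i j : 'I_n) : nat :=
  \big[minn/n]_(k < n | walk_len e i j k) k.

(* edge {l,m} lies on the path P_{i-j}: it joins two consecutive vertices
   of a duplicate-free walk (path) from i to j *)
Definition on_path n (e : rel 'I_n) (i j : 'I_n) (p : 'I_n * 'I_n) : bool :=
  [exists k : 'I_n, exists t : k.-tuple 'I_n,
     [&& path e i t, last i t == j, uniq (i :: val t) &
        ((p \in zip (i :: val t) t) || ((p.2, p.1) \in zip (i :: val t) t))]].

Definition signless_laplacian (R : pzRingType) n (e : rel 'I_n) : 'M[R]_n :=
  \matrix_(i, j) (if i == j then (#|[set k | e i k]|)%:R else (e i j)%:R).

Definition is_MP_inverse (R : pzRingType) n (A X : 'M[R]_n) : Prop :=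
  [/\ A *m X *m A = A, X *m A *m X = X,
      (A *m X)^T = A *m X & (X *m A)^T = X *m A].

Definition tree_Qplus (R : fieldType) n (e : rel 'I_n) : 'M[R]_n :=
  \matrix_(i, j)
    ((-1) ^+ dist e i j / (n%:R ^+ 2) *
     (\sum_(p | is_edge e p && (i \in head_comp e p) && (j \in head_comp e p))
         (#|tail_comp e p|%:R ^+ 2)
      + \sum_(p | is_edge e p && (i \in tail_comp e p) && (j \in tail_comp e p))
         (#|head_comp e p|%:R ^+ 2)
      - \sum_(p | is_edge e p && on_path e i j p)
         (#|head_comp e p|%:R * #|tail_comp e p|%:R))).

(* Main.v *)
Require Import Defs.
From mathcomp Require Import all_boot all_order all_algebra ring.
Set Implicit Arguments. Unset Strict Implicit. Unset Printing Implicit Defensive.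
Import Order.TTheory GRing.Theory Num.Theory.


Definition side n (e : rel 'I_n) (x y : 'I_n) : {set 'I_n} :=
  [set v | connect (del_edge e x y) y v].

Lemma mem_zip1 (S T : eqType) (s : seq S) (t : seq T) x y :
  (x, y) \in zip s t -> x \in s.
Proof.
elim: s t => [|a s IH] [|b t] //=; rewrite !in_cons => /orP[/eqP[-> _]|/IH ->].
  by rewrite eqxx.
by rewrite orbT.
Qed.

Lemma mem_zip2 (S T : eqType) (s : seq S) (t : seq T) x y :
  (x, y) \in zip s t -> y \in t.
Proof.
elim: s t => [|a s IH] [|b t] //=; rewrite !in_cons => /orP[/eqP[_ ->]|/IH ->].
  by rewrite eqxx.
by rewrite orbT.
Qed.

Lemma cclosed (T : finType) (r : rel T) (S : pred T) x y :
  (forall a b, r a b -> S a -> S b) -> S x -> connect r x y -> S y.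
Proof.
move=> cl Sx /connectP[p pth ->]; elim: p x Sx pth => [|a p IH] x Sx //=.
by case/andP=> rxa pth; apply: IH pth; apply: cl rxa Sx.
Qed.

Lemma del_edgeC n (e : rel 'I_n) x y a b :
  del_edge e x y a b = del_edge e y x a b.
Proof.
rewrite /del_edge; congr (_ && ~~ _).
by case: (a == x) (a == y) (b == x) (b == y) => [] [] [] [].
Qed.

Lemma del_edge_sym n (e : rel 'I_n) x y : symmetric e ->
  symmetric (del_edge e x y).
Proof.
move=> se a b; rewrite /del_edge se; congr (_ && ~~ _).
by case: (a == x) (a == y) (b == x) (b == y) => [] [] [] [].
Qed.

Lemma del_sub n (e : rel 'I_n) x y a b : del_edge e x y a b -> e a b.
Proof. by case/andP. Qed.


Lemma side_in n (e : rel 'I_n) x y : y \in side e x y.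
Proof. by rewrite inE connect0. Qed.

Lemma side_cover n (e : rel 'I_n) x y : is_tree e -> e x y ->
  forall v, (v \in side e x y) || (v \in side e y x).
Proof.
move=> [[se ie] [ce ac]] exy v.
apply: (@cclosed _ e (fun v => (v \in side e x y) || (v \in side e y x)) x v) => //; last first.
  by rewrite side_in orbT.
move=> a b eab /orP[]; rewrite !inE => H.
- case D: (del_edge e x y a b); first by rewrite (connect_trans H (connect1 D)).
  move: D; rewrite /del_edge eab /= => /negbFE /orP[]/andP[_ /eqP ->].
    by rewrite connect0 ?orbT.
  by rewrite connect0 ?orbT.
- case D: (del_edge e y x a b); first by rewrite (connect_trans H (connect1 D)) orbT.
  move: D; rewrite /del_edge eab /= => /negbFE /orP[]/andP[_ /eqP ->].
    by rewrite connect0 ?orbT.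
  by rewrite connect0 ?orbT.
Qed.

Lemma side_disj n (e : rel 'I_n) x y : is_tree e -> e x y ->
  forall v, ~~ ((v \in side e x y) && (v \in side e y x)).
Proof.
move=> [[se ie] [ce ac]] exy v; apply/negP; rewrite !inE => /andP[H1 H2].
have sd := del_edge_sym x y se.
have H2' : connect (del_edge e x y) x v.
  by rewrite (eq_connect (del_edgeC e x y)).
have : connect (del_edge e x y) y x.
  by apply: connect_trans H1 _; rewrite (sym_connect_sym sd).
case/connectP=> p pth lp.
move: lp; case: (shortenP pth) => p' pth' uq _.
case: p' pth' uq => [|z p'] pth' uq /=.
  by move=> xy; move: exy; rewrite xy ie.
case: p' pth' uq => [|z' p'] pth' uq /=.
  move=> xz; move: pth'; rewrite /= -xz /del_edge !eqxx /=.
  by rewrite orbT andbF.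
move=> lst.
have := ac y [:: z, z' & p'] (sub_path (@del_sub _ e x y) pth') uq isT.
by rewrite /= -lst exy.
Qed.


Lemma side_compl n (e : rel 'I_n) x y : is_tree e -> e x y ->
  forall v, (v \in side e y x) = (v \notin side e x y).
Proof.
move=> Ht exy v; have := side_cover Ht exy v; have := side_disj Ht exy v.
by case: (v \in side e x y); case: (v \in side e y x).
Qed.

Lemma side_notin n (e : rel 'I_n) x y : is_tree e -> e x y -> x \notin side e x y.
Proof. by move=> Ht exy; rewrite -side_compl // side_in. Qed.

Lemma side_cross n (e : rel 'I_n) x y a b : is_tree e -> e x y ->
  e a b -> a \in side e x y -> b \notin side e x y -> a = y /\ b = x.
Proof.
move=> Ht exy eab; rewrite !inE => Ha Hb.
case D: (del_edge e x y a b); first by rewrite (connect_trans Ha (connect1 D)) in Hb.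
move: D; rewrite /del_edge eab /= => /negbFE /orP[]/andP[/eqP Ea /eqP Eb]; last by [].
by rewrite Ea in Ha; move: (side_notin Ht exy); rewrite inE Ha.
Qed.

Lemma head_sideE n (e : rel 'I_n) p : head_comp e p = side e p.1 p.2.
Proof. by []. Qed.

Lemma tail_sideE n (e : rel 'I_n) p : tail_comp e p = side e p.2 p.1.
Proof. by apply/setP=> v; rewrite !inE (eq_connect (del_edgeC e p.1 p.2)). Qed.

Lemma card_side n (e : rel 'I_n) x y : is_tree e -> e x y ->
  #|side e y x| = n - #|side e x y|.
Proof.
move=> Ht exy; have -> : #|side e y x| = #|~: side e x y|.
  by apply: eq_card => v; rewrite side_compl // !inE.
have := cardsC (side e x y); rewrite card_ord.
set a := #|side e x y|; set b := #|~: side e x y|; move: a b => a b E.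
by rewrite -E addKn.
Qed.

Lemma nb_exists n (e : rel 'I_n) i j : is_tree e -> j != i ->
  exists2 v, e i v & j \in side e i v.
Proof.
move=> Ht; have [[se ie] [ce ac]] := Ht.
pose S := fun x => (x == i) || [exists v, e i v && (x \in side e i v)].
have : S j.
  apply: (@cclosed _ e S i j _ _ (ce i j)); last by rewrite /S eqxx.
  move=> a b eab; rewrite /S => /orP[/eqP Ea|/existsP[v /andP[eiv av]]].
    by apply/orP; right; apply/existsP; exists b; rewrite -Ea eab side_in.
  case D: (del_edge e i v a b).
    apply/orP; right; apply/existsP; exists v; rewrite eiv /=.
    by move: av; rewrite !inE => av; rewrite (connect_trans av (connect1 D)).
  move: D; rewrite /del_edge eab /= => /negbFE /orP[]/andP[/eqP Ea /eqP Eb].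
    by apply/orP; right; apply/existsP; exists v; rewrite eiv Eb side_in.
  by rewrite Eb eqxx.
rewrite /S => /orP[/eqP ->|/existsP[v /andP[eiv jv]]]; first by rewrite eqxx.
by move=> _; exists v.
Qed.

Lemma nb_unique n (e : rel 'I_n) i j v1 v2 : is_tree e -> e i v1 -> e i v2 ->
  j \in side e i v1 -> j \in side e i v2 -> v1 = v2.
Proof.
move=> Ht; have [[se ie] [ce ac]] := Ht => e1 e2 j1 j2.
apply/eqP/negPn/negP => ne.
have e2' : e v2 i by rewrite se.
have e1' : e v1 i by rewrite se.
have v2n : v2 \notin side e i v1.
  apply/negP => v2in.
  have [E _] := side_cross Ht e1 e2' v2in (side_notin Ht e1).
  by rewrite E eqxx in ne.
have v2in : v2 \in side e v1 i by rewrite side_compl.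
pose S := fun x => (x \in side e i v2) && (x \in side e v1 i).
have : S j.
  move: j2; rewrite inE => j2.
  apply: (@cclosed _ _ S v2 j _ _ j2); last by rewrite /S side_in v2in.
  move=> a b rab /andP[a2 a1]; apply/andP; split.
    by move: a2; rewrite !inE => a2; rewrite (connect_trans a2 (connect1 rab)).
  apply/negPn/negP => b1.
  have [Ea _] := side_cross Ht e1' (del_sub rab) a1 b1.
  by move: a2; rewrite Ea (negbTE (side_notin Ht e2)).
case/andP=> _ jv1.
by have := side_disj Ht e1 j; rewrite j1 jv1.
Qed.

Lemma nb_count n (e : rel 'I_n) i j : is_tree e ->
  \sum_(v | e i v) (j \in side e i v) = (j != i).
Proof.
move=> Ht; have [[se ie] [ce ac]] := Ht.
have [->|ji] := eqVneq j i.
  by rewrite big1 // => v eiv; rewrite (negbTE (side_notin Ht eiv)).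
have [v0 e0 j0] := nb_exists Ht ji.
rewrite (bigD1 v0) //= j0 big1 // => v /andP[eiv nv].
apply/eqP; rewrite eqb0; apply/negP => jv.
by move: nv; rewrite (nb_unique Ht eiv e0 jv j0) eqxx.
Qed.

Lemma nb_card n (e : rel 'I_n) i : is_tree e ->
  \sum_(v | e i v) #|side e i v| = n.-1.
Proof.
move=> Ht.
have -> : \sum_(v | e i v) #|side e i v| = \sum_(v | e i v) \sum_j (j \in side e i v).
  by apply: eq_bigr => v _; rewrite -sum1_card big_mkcond.
rewrite exchange_big /=.
rewrite (eq_bigr (fun j => (j != i) : nat)); last by move=> j _; exact: nb_count.
rewrite -big_mkcond /= sum1_card cardC1 card_ord.
by [].
Qed.


Definition edge_of n (a b : 'I_n) : 'I_n * 'I_n := if (a < b)%N then (a, b) else (b, a).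

Lemma is_edgeE n (e : rel 'I_n) p : is_edge e p -> e p.1 p.2.
Proof. by case/andP. Qed.

Lemma tail_in n (e : rel 'I_n) p v : is_tree e -> is_edge e p ->
  (v \in tail_comp e p) = (v \notin head_comp e p).
Proof. by move=> Ht /is_edgeE ep; rewrite tail_sideE head_sideE side_compl. Qed.

Lemma edge_of_is_edge n (e : rel 'I_n) a b : is_tree e -> e a b -> is_edge e (edge_of a b).
Proof.
move=> [[se ie] _] eab; rewrite /edge_of /is_edge.
case: (ltngtP a b) => [ab|ba|ab] /=.
- by rewrite ab eab.
- by rewrite ba se eab.
- by move: eab; rewrite (val_inj ab) ie.
Qed.

Lemma cross_pair n (e : rel 'I_n) p a b : is_tree e -> is_edge e p -> e a b ->
  (a \in head_comp e p) != (b \in head_comp e p) ->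
  ((a, b) == p) || ((a, b) == (p.2, p.1)).
Proof.
move=> Ht /is_edgeE ep eab; rewrite head_sideE.
have [[se _] _] := Ht.
case Ha: (a \in side e p.1 p.2); case Hb: (b \in side e p.1 p.2) => //= _.
  have [-> ->] := side_cross Ht ep eab Ha (negbT Hb).
  by rewrite eqxx orbT.
have eba : e b a by rewrite se.
have [-> ->] := side_cross Ht ep eba Hb (negbT Ha).
by rewrite -surjective_pairing eqxx.
Qed.

Lemma H_flip n (e : rel 'I_n) a b : is_tree e -> e a b ->
  (a \in head_comp e (edge_of a b)) != (b \in head_comp e (edge_of a b)).
Proof.
move=> Ht eab; have ep := is_edgeE (edge_of_is_edge Ht eab).
rewrite head_sideE; have := side_in e (edge_of a b).1 (edge_of a b).2.
have := side_notin Ht ep.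
rewrite /edge_of; case: ifP => _ /= /negbTE -> -> //.
Qed.

Lemma H_other n (e : rel 'I_n) p a b : is_tree e -> is_edge e p -> e a b ->
  p != edge_of a b -> (a \in head_comp e p) = (b \in head_comp e p).
Proof.
move=> Ht ip eab ne; apply/eqP/negP => /negP D.
have := cross_pair Ht ip eab D; move: ne ip {D}.
case: p => p1 p2; rewrite /edge_of /is_edge /=.
move=> ne /andP[lt _] /orP[] /eqP[E1 E2]; subst.
  by move: ne; rewrite lt eqxx.
by move: ne; rewrite ltnNge (ltnW lt) eqxx.
Qed.

Lemma path_cross n (e : rel 'I_n) p : is_tree e -> is_edge e p ->
  forall i t, path e i t -> uniq (i :: t) ->
  ((p \in zip (i :: t) t) || ((p.2, p.1) \in zip (i :: t) t)) =
  ((i \in head_comp e p) != (last i t \in head_comp e p)).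
Proof.
move=> Ht ip; have ep := is_edgeE ip.
have H2 : p.2 \in head_comp e p by rewrite head_sideE side_in.
have H1 : p.1 \notin head_comp e p by rewrite head_sideE side_notin.
move=> i t; elim: t i => [|a t IH] i /=; first by rewrite eqxx.
case/andP=> eia pth; rewrite in_cons => /andP[iat uq].
rewrite !in_cons /=.
case C: (((i, a) == p) || ((i, a) == (p.2, p.1))).
  have iZ : forall x y, (x, y) \in zip (a :: t) t -> (x != i) && (y != i).
    move=> x y xy; apply/andP; split; apply/eqP => E; move: iat; rewrite -E.
      by rewrite -in_cons (mem_zip1 xy).
    by rewrite (mem_zip2 xy) orbT.
  have nZ1 : p \notin zip (a :: t) t.
    apply/negP; case: p ip ep H2 H1 C {IH} => p1 p2 ip ep H2 H1 C pZ.
    have := iZ _ _ pZ; move: C => /orP[]/eqP[<- _]; rewrite eqxx //= andbF //.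
  have nZ2 : (p.2, p.1) \notin zip (a :: t) t.
    apply/negP; case: p ip ep H2 H1 C {IH nZ1} => p1 p2 ip ep H2 H1 C pZ.
    have := iZ _ _ pZ; move: C => /orP[]/eqP[<- _]; rewrite eqxx //= andbF //.
  have := IH a pth uq; rewrite (negbTE nZ1) (negbTE nZ2) => /esym/negbFE/eqP <-.
  have -> : (i \in head_comp e p) != (a \in head_comp e p).
    case: p ip ep H2 H1 C {IH iZ nZ1 nZ2} => p1 p2 ip ep H2 H1 /orP[]/eqP[-> ->] /=.
      by rewrite (negbTE H1) H2.
    by rewrite (negbTE H1) H2.
  by move: C; rewrite !(eq_sym (i, a)); case/orP => ->; rewrite ?orbT.
have Eia : (i \in head_comp e p) = (a \in head_comp e p).
  apply/eqP/negP => /negP D; have := cross_pair Ht ip eia D; rewrite C //.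
rewrite Eia -(IH a pth uq).
move/negbT: C; rewrite !(eq_sym (i, a)) negb_or => /andP[/negbTE -> /negbTE ->] //.
Qed.

Lemma on_pathE n (e : rel 'I_n) i j p : is_tree e -> is_edge e p ->
  on_path e i j p = ((i \in head_comp e p) != (j \in head_comp e p)).
Proof.
move=> Ht ip; apply/idP/idP.
  case/existsP=> k /existsP[t /and4P[pth /eqP lst uq Z]].
  by rewrite -lst -path_cross.
move=> D; have [_ [ce _]] := Ht.
case/connectP: (ce i j) => q qth qlst.
move: qlst; case: (shortenP qth) => q' qth' uq _ qlst.
have szq : (size q' < n)%N.
  have := card_uniqP uq; rewrite /= => E.
  by have := max_card (mem (i :: q')); rewrite E card_ord.
apply/existsP; exists (Ordinal szq); apply/existsP; exists (in_tuple q').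
rewrite /= qth' -qlst eqxx /=; move: (uq) => /= ->; rewrite (path_cross Ht ip qth' uq) -qlst. by [].
Qed.

Local Open Scope ring_scope.


Definition sg (R : pzRingType) n (e : rel 'I_n) (v : 'I_n) : R :=
  \prod_(p | is_edge e p) (if v \in head_comp e p then 1 else -1).

Lemma sg2 (R : comPzRingType) n (e : rel 'I_n) v : sg R e v * sg R e v = 1.
Proof.
rewrite /sg -big_split /= big1 // => p _; case: ifP => _; rewrite ?mulr1 //.
by rewrite mulrNN mulr1.
Qed.

Lemma sg_adj (R : comPzRingType) n (e : rel 'I_n) a b : is_tree e -> e a b ->
  sg R e b = - sg R e a.
Proof.
move=> Ht eab; have ip := edge_of_is_edge Ht eab.
rewrite /sg (bigD1 (edge_of a b)) // [in RHS](bigD1 (edge_of a b)) //=.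
rewrite -mulNr; congr (_ * _).
  have := H_flip Ht eab.
  by case: (a \in _); case: (b \in _) => //= _; rewrite opprK.
apply: eq_bigr => p /andP[pe ne]; by rewrite (H_other Ht pe eab ne).
Qed.

Lemma walk_sg (R : comPzRingType) n (e : rel 'I_n) i t : is_tree e -> path e i t ->
  sg R e (last i t) = (-1) ^+ size t * sg R e i.
Proof.
move=> Ht; elim: t i => [|a t IH] i /=; first by rewrite mul1r.
case/andP=> eia pth; rewrite IH // (sg_adj _ Ht eia) exprS.
by rewrite mulrN mulN1r mulNr.
Qed.

Lemma uniq_path_exists n (e : rel 'I_n) i j : is_tree e ->
  exists t : seq 'I_n, [/\ path e i t, last i t = j & (size t < n)%N].
Proof.
move=> [_ [ce _]].
case/connectP: (ce i j) => q qth qlst.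
move: qlst; case: (shortenP qth) => q' qth' uq _ qlst.
exists q'; split => //.
have := card_uniqP uq; rewrite /= => E.
by have := max_card (mem (i :: q')); rewrite E card_ord.
Qed.

Lemma bigmin_le m (r : seq 'I_m) (P : pred 'I_m) (x : 'I_m) :
  x \in r -> P x -> (\big[minn/m]_(k <- r | P k) (k : nat) <= x)%N.
Proof.
elim: r => [|a r IH] //; rewrite in_cons big_cons => /orP[/eqP <- ->|xr Px].
  exact: geq_minl.
case: ifP => _; last exact: IH.
exact: leq_trans (geq_minr _ _) (IH xr Px).
Qed.

Lemma dist_sign (R : comPzRingType) n (e : rel 'I_n) i j : is_tree e ->
  (-1) ^+ dist e i j = sg R e i * sg R e j :> R.
Proof.
move=> Ht.
have [t0 [pth0 l0 sz0]] := uniq_path_exists i j Ht.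
have wl0 : walk_len e i j (size t0).
  by apply/existsP; exists (in_tuple t0); rewrite pth0 l0 eqxx.
have le : (dist e i j <= size t0)%N.
  exact: (@bigmin_le n (index_enum 'I_n) _ (Ordinal sz0) (mem_index_enum _) wl0).
have : (dist e i j == n) || walk_len e i j (dist e i j).
  rewrite /dist; apply: (big_ind (fun x => (x == n) || walk_len e i j x)).
  - by rewrite eqxx.
  - move=> x y Hx Hy; rewrite /minn; case: ifP => _ //.
  - by move=> k ->; rewrite orbT.
case/orP=> [/eqP E|].
  by move: le; rewrite E leqNgt sz0.
case/existsP=> t /andP[pth /eqP lst].
have Hs := walk_sg R Ht pth; rewrite lst in Hs.
by rewrite Hs size_tuple mulrCA sg2 mulr1.
Qed.


Definition uu (R : pzRingType) n (e : rel 'I_n) p (x : 'I_n) : R :=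
  n%:R * (x \in head_comp e p)%:R - #|head_comp e p|%:R.

Definition MM (R : pzRingType) n (e : rel 'I_n) (i j : 'I_n) : R :=
  \sum_(p | is_edge e p) uu R e p i * uu R e p j.

Lemma card_tail n (e : rel 'I_n) p : is_tree e -> is_edge e p ->
  #|tail_comp e p| = (n - #|head_comp e p|)%N.
Proof. by move=> Ht /is_edgeE ep; rewrite tail_sideE head_sideE card_side. Qed.

Lemma Qplus_entry (R : realFieldType) n (e : rel 'I_n) i j : is_tree e ->
  tree_Qplus R e i j = sg R e i * sg R e j / n%:R ^+ 2 * MM R e i j.
Proof.
move=> Ht; rewrite mxE (dist_sign R _ _ Ht); congr (_ * _).
rewrite /MM (big_mkcond (fun p => is_edge e p)) /=.
rewrite (big_mkcond (fun p => _ && _ && _)) (big_mkcond (fun p => _ && _ && _)).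
rewrite (big_mkcond (fun p => _ && _)) -big_split -sumrB /=.
apply: eq_bigr => p _.
case ip: (is_edge e p) => /=; last by rewrite !addr0 subr0.
rewrite on_pathE // !tail_in // card_tail //.
have hn : (#|head_comp e p| <= n)%N.
  by rewrite -[X in (_ <= X)%N]card_ord max_card.
rewrite natrB // /uu.
case: (i \in head_comp e p); case: (j \in head_comp e p) => /=.
all: rewrite ?mulr1 ?mulr0 ?addr0 ?subr0 ?add0r ?sub0r; ring.
Qed.

Lemma u_diff (R : realFieldType) n (e : rel 'I_n) i v j : is_tree e -> e i v ->
  \sum_(p | is_edge e p) uu R e p j * (uu R e p i - uu R e p v) =
  n%:R * (#|side e i v|%:R - n%:R * (j \in side e i v)%:R).
Proof.
move=> Ht eiv; have ip := edge_of_is_edge Ht eiv.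
rewrite (bigD1 (edge_of i v)) //= big1 ?addr0; last first.
  move=> p /andP[pe ne]; by rewrite /uu (H_other Ht pe eiv ne) subrr mulr0.
have hn : (#|side e i v| <= n)%N.
  by rewrite -[X in (_ <= X)%N]card_ord max_card.
have ve : e v i by case: Ht => [[se _] _]; rewrite se.
rewrite /uu head_sideE /edge_of; case: ifP => _ /=.
  rewrite (side_in e i v) (negbTE (side_notin Ht eiv)) /=; ring.
rewrite (side_in e v i) (negbTE (side_notin Ht ve)) side_compl // card_side //.
rewrite natrB //; case: (j \in side e i v) => /=; ring.
Qed.

Lemma sum_u (R : realFieldType) n (e : rel 'I_n) p :
  \sum_j uu R e p j = 0.
Proof.
rewrite /uu sumrB -mulr_sumr sumr_const card_ord.
have -> : \sum_(j : 'I_n) ((j \in head_comp e p)%:R : R) = #|head_comp e p|%:R.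
  rewrite -natr_sum; congr (_%:R); rewrite -sum1_card [RHS]big_mkcond /=.
  apply: eq_bigr => j _; by case: (j \in _).
by rewrite mulr_natl subrr.
Qed.

Definition Pi (R : realFieldType) n (e : rel 'I_n) : 'M[R]_n :=
  \matrix_(i, j) ((i == j)%:R - sg R e i * sg R e j / n%:R).

Lemma QP_entry (R : realFieldType) n (e : rel 'I_n) i j : is_tree e -> (0 < n)%N ->
  (signless_laplacian R e *m tree_Qplus R e) i j = Pi R e i j.
Proof.
move=> Ht n0; have [[se ie] _] := Ht.
have nz : (n%:R : R) != 0 by rewrite pnatr_eq0 -lt0n.
rewrite [in LHS]mxE (bigD1 i) //= [signless_laplacian R e i i]mxE eqxx.
have -> : \sum_(v | v != i) (signless_laplacian R e) i v * tree_Qplus R e v j =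
          \sum_(v | e i v) tree_Qplus R e v j.
  rewrite big_mkcond [RHS]big_mkcond; apply: eq_bigr => v _ /=.
  rewrite mxE; have [->|ne] := eqVneq v i; first by rewrite /= ie.
  by rewrite /=; case: (e i v); rewrite ?mul1r ?mul0r.
have -> : (#|[set k | e i k]|%:R : R) * tree_Qplus R e i j =
          \sum_(v | e i v) tree_Qplus R e i j.
  rewrite sumr_const mulrC mulr_natr; congr (_ *+ _); apply: eq_card => v.
  by rewrite inE.
rewrite -big_split /=.
have -> : \sum_(v | e i v) (tree_Qplus R e i j + tree_Qplus R e v j) =
   \sum_(v | e i v) (sg R e i * sg R e j / n%:R ^+ 2 *
      (n%:R * (#|side e i v|%:R - n%:R * (j \in side e i v)%:R))).
  apply: eq_bigr => v eiv; rewrite !Qplus_entry // (sg_adj R Ht eiv).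
  rewrite -(u_diff R j Ht eiv) /MM !mulNr -mulrBr -sumrB; congr (_ * _).
  by apply: eq_bigr => p _; rewrite mulrBr !(mulrC (uu R e p j)).
rewrite -!mulr_sumr sumrB -mulr_sumr.
rewrite -natr_sum (nb_card i Ht).
rewrite (eq_bigr (fun v => ((j \in side e i v) : nat)%:R)) //.
rewrite -natr_sum nb_count // mxE.
have sgi : sg R e i * sg R e i = 1 by rewrite sg2.
rewrite -subn1 natrB //.
have [->|ne] := eqVneq i j.
  by rewrite sg2 /=; field.
by rewrite /=; field.
Qed.


Lemma Pi_mul (R : realFieldType) n (e : rel 'I_n) (X : 'M[R]_n) :
  (forall j, \sum_v sg R e v * X v j = 0) -> Pi R e *m X = X.
Proof.
move=> H; apply/matrixP => i j; rewrite !mxE.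
rewrite (eq_bigr (fun v => (i == v)%:R * X v j - sg R e i / n%:R * (sg R e v * X v j))); last first.
  by move=> v _; rewrite mxE; ring.
rewrite sumrB -mulr_sumr H mulr0 subr0 (bigD1 i) //= eqxx mul1r big1 ?addr0 //.
by move=> v /negbTE; rewrite eq_sym => ->; rewrite mul0r.
Qed.

Lemma Q_sym (R : realFieldType) n (e : rel 'I_n) : is_tree e ->
  (signless_laplacian R e)^T = signless_laplacian R e.
Proof.
move=> [[se _] _]; apply/matrixP => i j; rewrite !mxE eq_sym se.
by case: eqP => // ->.
Qed.

Lemma P_sym (R : realFieldType) n (e : rel 'I_n) : is_tree e ->
  (tree_Qplus R e)^T = tree_Qplus R e.
Proof.
move=> Ht; apply/matrixP => i j; rewrite mxE !Qplus_entry // [sg R e j * _]mulrC.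
congr (_ * _); apply: eq_bigr => p _; exact: mulrC.
Qed.

Lemma Pi_sym (R : realFieldType) n (e : rel 'I_n) : (Pi R e)^T = Pi R e.
Proof. by apply/matrixP => i j; rewrite !mxE eq_sym [sg R e j * _]mulrC. Qed.

Lemma Q_sg (R : realFieldType) n (e : rel 'I_n) j : is_tree e ->
  \sum_v sg R e v * signless_laplacian R e v j = 0.
Proof.
move=> Ht; have [[se ie] _] := Ht.
rewrite (bigD1 j) //= mxE eqxx.
rewrite (eq_bigr (fun v => if e j v then - sg R e j else 0)); last first.
  move=> v ne; rewrite mxE (negbTE ne) se; case E: (e j v) => /=.
    by rewrite mulr1 (sg_adj R Ht E).
  by rewrite mulr0.
have -> : \sum_(v | v != j) (if e j v then - sg R e j else 0) =
          \sum_(v | e j v) - sg R e j.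
  rewrite big_mkcond [RHS]big_mkcond; apply: eq_bigr => v _ /=.
  by case: eqVneq => [->|]; rewrite ?ie.
rewrite sumr_const.
have -> : #|[set k | e j k]| = #|(fun v => e j v)| by apply: eq_card => v; rewrite inE.
by rewrite mulr_natr mulNrn addrN.
Qed.

Lemma P_sg (R : realFieldType) n (e : rel 'I_n) i : is_tree e ->
  \sum_j tree_Qplus R e i j * sg R e j = 0.
Proof.
move=> Ht.
rewrite (eq_bigr (fun j => sg R e i / n%:R ^+ 2 * \sum_(p | is_edge e p) uu R e p i * uu R e p j)); last first.
  move=> j _; rewrite Qplus_entry // /MM.
  rewrite [LHS](_ : _ = sg R e i / n%:R ^+ 2 * MM R e i j * (sg R e j * sg R e j)).
    by rewrite sg2 mulr1.
  by rewrite /MM; ring.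
rewrite -mulr_sumr exchange_big /= big1 ?mulr0 // => p _.
by rewrite -mulr_sumr sum_u mulr0.
Qed.



Lemma MP_unique (R : comPzRingType) n (A X Y : 'M[R]_n) :
  is_MP_inverse A X -> is_MP_inverse A Y -> X = Y.
Proof.
case=> [AXA XAX AXt XAt] [AYA YAY AYt YAt].
have L1 : (A *m X)^T *m (A *m Y)^T = (A *m X)^T.
  by rewrite -trmx_mul !mulmxA AYA.
have L2 : (X *m A)^T *m (Y *m A)^T = (Y *m A)^T.
  by rewrite -trmx_mul -!mulmxA [A *m (X *m A)]mulmxA AXA.
have E1 : X = X *m A *m Y.
  rewrite -{1}XAX -mulmxA -AXt -L1 AXt AYt !mulmxA XAX //.
have E2 : Y = X *m A *m Y.
  rewrite -{1}YAY -YAt -L2 XAt YAt -!mulmxA [Y *m (A *m Y)]mulmxA YAY.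
  by rewrite mulmxA.
by rewrite E1 -E2.
Qed.

Unset Implicit Arguments.
Theorem mainTheorem3 (R : realFieldType) (n : nat) (e : rel 'I_n) :
  is_tree e ->
  is_MP_inverse (signless_laplacian R e) (tree_Qplus R e) /\
  (forall X : 'M[R]_n,
     is_MP_inverse (signless_laplacian R e) X -> X = tree_Qplus R e).
Proof.
move=> Ht.
suff ex : is_MP_inverse (signless_laplacian R e) (tree_Qplus R e).
  by split => // X HX; exact: MP_unique HX ex.
case: n e Ht => [|m] e Ht.
  by split; apply/matrixP => -[].
set Q := signless_laplacian R e; set P := tree_Qplus R e.
have QP : Q *m P = Pi R e by apply/matrixP => i j; rewrite QP_entry.
have PQ : P *m Q = Pi R e.
  by rewrite -Pi_sym -QP trmx_mul P_sym // Q_sym.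
split.
- rewrite QP Pi_mul // => j; exact: Q_sg.
- rewrite PQ Pi_mul // => j; rewrite -[RHS](P_sg R j Ht); apply: eq_bigr => v _.
  have PE : P v j = P j v by rewrite /P -{1}(P_sym R Ht) mxE.
  by rewrite PE mulrC.
- by rewrite QP Pi_sym.
- by rewrite PQ Pi_sym.
Qed.
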